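(* Let $\alpha\ge1$ be an ordinal and let $\aleph$ be the cardinality of $\mathrm{Zigzag}_\alpha$. Then every questionable representation of $\mathrm{Zigzag}_\alpha$ has width at least $\aleph$.
   Context: Orders are partial orders. $\mathrm{Zigzag}_\alpha$ is the order on the disjoint elements $s_i,s'_i$ ($i<\alpha$) whose comparabilities are exactly: $s_i<s'_i$ for $i<\alpha$; $s_i<s'_{i+1}$ whenever $i+1<\alpha$; and $s_j<s'_i$ whenever $j<i<\alpha$ and $i$ is a limit ordinal. For an ordinal $j$, $\mathcal O_j=(O_k)_{k<j}$ is a sequence of orders; a word of length $\ell\le j$ is $(x_k)_{k<\ell}$ with $x_k\in\mathrm{Dom}(O_k)$. The question of words $X,Y$ is $(k,x_k,y_k)$ for the least $k<\min(\mathrm{len}X,\mathrm{len}Y)$ with $x_k\neq y_k$, if it exists. For $i<j$, $\mathrm{Next}(i,j,\mathcal O_j)$ is the partial order on words of length $\ell$, $i\le \ell<j$, with $X<Y$ iff their question $(k,x_k,y_k)$ exists and $x_k<y_k$ in $O_k$; otherwise incomparable. A questionable representation of an order $O$ is an injective $f$ into some $\mathrm{Next}(i,j,\mathcal O_j)$ with $f(x)<f(y)\iff x<y$; its width is the supremum of the cardinalities of the $\mathrm{Dom}(O_k)$, $k<j$. *)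

(* Defs.v *)
(* Ordinals are represented (up to isomorphism) by well-ordered
   types: an ordinal beta is the well-ordered type of ordinals < beta. *)
From Stdlib Require Import Classical.

Record WOrd : Type := {
  wo_car :> Type;
  wo_lt : wo_car -> wo_car -> Prop;
  wo_trans : forall x y z, wo_lt x y -> wo_lt y z -> wo_lt x z;
  wo_total : forall x y, wo_lt x y \/ x = y \/ wo_lt y x;
  wo_wf : well_founded wo_lt
}.
Arguments wo_lt {w} _ _.

Definition is_succ_of {A : WOrd} (k i : A) : Prop :=
  wo_lt k i /\ ~ (exists m, wo_lt k m /\ wo_lt m i).

Definition is_limit {A : WOrd} (i : A) : Prop :=
  (exists k, wo_lt k i) /\ ~ (exists k, is_succ_of k i).

(** Zigzag_alpha : elements s_i = inl i, s'_i = inr i (i < alpha);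
    strict order relation given exactly by the listed comparabilities. *)
Definition zigzag_dom (A : WOrd) : Type := (A + A)%type.

Definition zigzag_lt (A : WOrd) (x y : zigzag_dom A) : Prop :=
  match x, y with
  | inl j, inr i => j = i \/ is_succ_of j i \/ (wo_lt j i /\ is_limit i)
  | _, _ => False
  end.

Definition strict_po (T : Type) (R : T -> T -> Prop) : Prop :=
  (forall x, ~ R x x) /\ (forall x y z, R x y -> R y z -> R x z).

Definition word (J : WOrd) (D : J -> Type) : Type :=
  { l : J & forall k : J, wo_lt k l -> D k }.

Definition wlen {J D} (X : @word J D) : J := projT1 X.

Definition word_eq {J D} (X Y : @word J D) : Prop :=
  wlen X = wlen Y /\
  forall k p q, projT2 X k p = projT2 Y k q.

(** X < Y in Next: the question (k, x_k, y_k) exists and x_k < y_k in O_k. *)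
Definition next_lt {J : WOrd} {D : J -> Type} (R : forall k, D k -> D k -> Prop)
    (X Y : word J D) : Prop :=
  exists k (pX : wo_lt k (wlen X)) (pY : wo_lt k (wlen Y)),
    projT2 X k pX <> projT2 Y k pY /\
    (forall m (qX : wo_lt m (wlen X)) (qY : wo_lt m (wlen Y)),
        wo_lt m k -> projT2 X m qX = projT2 Y m qY) /\
    R k (projT2 X k pX) (projT2 Y k pY).

(** f is a questionable representation of (P, lt) into Next(i, j, O_j),
    where J is the ordinal j and i : J. *)
Definition questionable_rep {P : Type} (ltP : P -> P -> Prop)
    (J : WOrd) (D : J -> Type) (R : forall k, D k -> D k -> Prop)
    (i : J) (f : P -> word J D) : Prop :=
  (forall x, wlen (f x) = i \/ wo_lt i (wlen (f x))) /\
  (forall x y, word_eq (f x) (f y) -> x = y) /\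
  (forall x y, next_lt R (f x) (f y) <-> ltP x y).

Definition card_le (X Y : Type) : Prop := exists f : X -> Y, forall a b, f a = f b -> a = b.
Definition card_lt (X Y : Type) : Prop := card_le X Y /\ ~ card_le Y X.

(** width = sup_{k<j} |D k| is at least |Z|: for every cardinal |L| < |Z|,
    some |D k| exceeds |L|. *)
Definition width_ge (J : WOrd) (D : J -> Type) (Z : Type) : Prop :=
  forall L : Type, card_lt L Z -> exists k : J, ~ card_le (D k) L.

(* Main.v *)
Require Import Defs.
From Stdlib Require Import Classical ProofIrrelevance.

Lemma wf_min {A : WOrd} (Q : A -> Prop) :
  (exists a, Q a) -> exists m, Q m /\ forall k, wo_lt k m -> ~ Q k.
Proof.
  intros [a Ha]. apply NNPP; intro Hn.
  assert (H : forall b, ~ Q b).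
  { intro b. induction b as [b IH] using (well_founded_ind (wo_wf A)).
    intro Hb. apply Hn. exists b. split; [exact Hb|]. intros k Hk. apply IH; exact Hk. }
  exact (H a Ha).
Qed.

Lemma wo_irrefl (A : WOrd) (j : A) : ~ wo_lt j j.
Proof. induction j as [j IH] using (well_founded_ind (wo_wf A)). intro C. exact (IH j C C). Qed.

Section Prime.
Variable A : WOrd.
Variable a0 : A.
Hypothesis a0min : forall k, ~ wo_lt k a0.
Variable P : zigzag_dom A -> Prop.
Hypothesis Hmod : forall x y z, P x -> P y -> ~ P z ->
  (zigzag_lt A x z <-> zigzag_lt A y z) /\ (zigzag_lt A z x <-> zigzag_lt A z y).

Lemma a0_le : forall b : A, b = a0 \/ wo_lt a0 b.
Proof.
  intro b. destruct (wo_total A b a0) as [H|[H|H]]; auto.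
  exfalso; exact (a0min _ H).
Qed.

Lemma zig_prime : forall x y, P x -> P y -> x <> y -> forall z, P z.
Proof.
  intros x y Px Py Hxy.
  assert (Hboth : (exists a, P (inl a)) /\ (exists b, P (inr b))).
  { destruct x as [j|j], y as [j'|j'].
    - destruct (wo_total A j j') as [H|[H|H]].
      + split; [eauto|]. exists j. apply NNPP; intro Hn.
        destruct (Hmod _ _ _ Px Py Hn) as [H1 _].
        destruct (proj1 H1 (or_introl eq_refl)) as [E|[[E1 _]|[E1 _]]].
        * subst; exact (Hxy eq_refl).
        * pose proof (wo_trans A _ _ _ H E1) as C. exact (wo_irrefl _ _ C).
        * pose proof (wo_trans A _ _ _ H E1) as C. exact (wo_irrefl _ _ C).
      + subst; exfalso; exact (Hxy eq_refl).
      + split; [eauto|]. exists j'. apply NNPP; intro Hn.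
        destruct (Hmod _ _ _ Py Px Hn) as [H1 _].
        destruct (proj1 H1 (or_introl eq_refl)) as [E|[[E1 _]|[E1 _]]].
        * subst; exact (Hxy eq_refl).
        * pose proof (wo_trans A _ _ _ H E1) as C. exact (wo_irrefl _ _ C).
        * pose proof (wo_trans A _ _ _ H E1) as C. exact (wo_irrefl _ _ C).
    - eauto.
    - eauto.
    - destruct (wo_total A j j') as [H|[H|H]].
      + split; [|eauto]. exists j'. apply NNPP; intro Hn.
        destruct (Hmod _ _ _ Py Px Hn) as [_ H1].
        destruct (proj1 H1 (or_introl eq_refl)) as [E|[[E1 _]|[E1 _]]].
        * subst; exact (Hxy eq_refl).
        * pose proof (wo_trans A _ _ _ H E1) as C. exact (wo_irrefl _ _ C).
        * pose proof (wo_trans A _ _ _ H E1) as C. exact (wo_irrefl _ _ C).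
      + subst; exfalso; exact (Hxy eq_refl).
      + split; [|eauto]. exists j. apply NNPP; intro Hn.
        destruct (Hmod _ _ _ Px Py Hn) as [_ H1].
        destruct (proj1 H1 (or_introl eq_refl)) as [E|[[E1 _]|[E1 _]]].
        * subst; exact (Hxy eq_refl).
        * pose proof (wo_trans A _ _ _ H E1) as C. exact (wo_irrefl _ _ C).
        * pose proof (wo_trans A _ _ _ H E1) as C. exact (wo_irrefl _ _ C). }
  destruct Hboth as [[a Pa] [b Pb]].
  assert (Hcl : forall u w, P u -> zigzag_lt A u w \/ zigzag_lt A w u -> P w).
  { intros u w Pu Huw. apply NNPP; intro Hn.
    destruct u as [c|c], w as [d|d]; simpl in Huw.
    - destruct Huw as [[]|[]].
    - destruct (Hmod _ _ _ Pu Pb Hn) as [H1 _].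
      destruct Huw as [Huw|[]]. exact (proj1 H1 Huw).
    - destruct (Hmod _ _ _ Pu Pa Hn) as [_ H1].
      destruct Huw as [[]|Huw]. exact (proj1 H1 Huw).
    - destruct Huw as [[]|[]]. }
  assert (Hs0 : P (inl a0)).
  { clear Px Py Pa Hxy. revert Pb. induction b as [b IH] using (well_founded_ind (wo_wf A)).
    intro Pb. destruct (a0_le b) as [E|Hlt].
    - subst. apply (Hcl (inr a0)); auto. right; simpl; auto.
    - destruct (classic (exists k, is_succ_of k b)) as [[k Hk]|Hn].
      + apply (IH k (proj1 Hk)).
        assert (P (inl k)) by (apply (Hcl (inr b)); auto; right; simpl; auto).
        apply (Hcl (inl k)); auto. left; simpl; auto.
      + apply (Hcl (inr b)); auto. right; simpl. right; right.
        split; auto. split; eauto. }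
  assert (Htop : forall i, P (inr i)).
  { intro i. induction i as [i IH] using (well_founded_ind (wo_wf A)).
    destruct (a0_le i) as [E|Hlt].
    - subst. apply (Hcl (inl a0)); auto. left; simpl; auto.
    - destruct (classic (exists k, is_succ_of k i)) as [[k Hk]|Hn].
      + assert (P (inl k)).
        { apply (Hcl (inr k)); [apply IH; exact (proj1 Hk)|]. right; simpl; auto. }
        apply (Hcl (inl k)); auto. left; simpl; auto.
      + apply (Hcl (inl a0)); auto. left; simpl. right; right.
        split; auto. split; eauto. }
  intros [z|z]; auto. apply (Hcl (inr z)); auto. right; simpl; auto.
Qed.
End Prime.

Theorem lemma7p1 :
  forall (A : WOrd), inhabited A ->
  forall (J : WOrd) (D : J -> Type) (R : forall k, D k -> D k -> Prop)
         (i : J) (f : zigzag_dom A -> word J D),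
    (forall k, strict_po (D k) (R k)) ->
    questionable_rep (zigzag_lt A) J D R i f ->
    width_ge J D (zigzag_dom A).
Proof.
  intros A [a] J D R i f Hpo [Hlen [Hinj Hrep]] L [HLZ HnZL].
  set (S := fun k : J => exists x y (px : wo_lt k (wlen (f x))) (py : wo_lt k (wlen (f y))),
              projT2 (f x) k px <> projT2 (f y) k py).
  assert (HSnl : forall x y, next_lt R (f x) (f y) ->
            exists k', S k' /\ wo_lt k' (wlen (f x)) /\ wo_lt k' (wlen (f y))).
  { intros x y [k' [pX [pY [Hd _]]]]. exists k'. split; auto. exists x, y, pX, pY; auto. }
  assert (HS : exists k, S k).
  { destruct (HSnl (inl a) (inr a)) as [k' [H _]].
    - apply Hrep. simpl; auto.
    - eauto. }
  destruct (wf_min S HS) as [k [Sk kmin]].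
  assert (Hagree : forall m x y px py, wo_lt m k -> projT2 (f x) m px = projT2 (f y) m py).
  { intros m x y px py Hm. apply NNPP; intro Hn. apply (kmin m Hm). exists x, y, px, py; auto. }
  assert (Hlong : forall x, wo_lt k (wlen (f x))).
  { intro x. apply NNPP; intro Hn.
    assert (exists k', S k' /\ wo_lt k' (wlen (f x))) as [k' [Sk' Hk']].
    { destruct x as [c|c].
      - destruct (HSnl (inl c) (inr c)) as [k' [? [? ?]]]; [apply Hrep; simpl; auto|eauto].
      - destruct (HSnl (inl c) (inr c)) as [k' [? [? ?]]]; [apply Hrep; simpl; auto|eauto]. }
    destruct (wo_total J k' k) as [H|[H|H]].
    - exact (kmin _ H Sk').
    - subst; exact (Hn Hk').
    - exact (Hn (wo_trans J _ _ _ H Hk')). }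
  set (phi := fun x => projT2 (f x) k (Hlong x)).
  assert (Hkey : forall x z, phi x <> phi z -> (next_lt R (f x) (f z) <-> R k (phi x) (phi z))).
  { intros x z Hne. split.
    - intros [k' [pX [pZ [Hd [Hbelow HR]]]]].
      destruct (wo_total J k' k) as [H|[H|H]].
      + exfalso; exact (Hd (Hagree _ _ _ _ _ H)).
      + subst k'. unfold phi. rewrite (proof_irrelevance _ (Hlong x) pX).
        rewrite (proof_irrelevance _ (Hlong z) pZ). exact HR.
      + exfalso; exact (Hne (Hbelow k (Hlong x) (Hlong z) H)).
    - intro HR. exists k, (Hlong x), (Hlong z). split; [exact Hne|]. split; [|exact HR].
      intros m qX qZ Hm. apply Hagree; exact Hm. }
  assert (Hphi : forall x y, phi x = phi y -> x = y).
  { intros x y Heq. apply NNPP; intro Hxy.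
    destruct (wf_min (fun _ : A => True) (ex_intro _ a I)) as [a0 [_ Ha0]].
    assert (Hall := zig_prime A a0 (fun k H => Ha0 k H I) (fun z => phi z = phi x)).
    assert (Hall' : forall z, phi z = phi x).
    { apply (Hall) with (x := x) (y := y); auto.
      intros u v w Pu Pv Pw. rewrite <- Pu in Pw. rewrite <- Pv in Pu.
      assert (Hvw : phi v <> phi w) by (rewrite <- Pu; intro E; apply Pw; congruence).
      assert (Huw : phi u <> phi w) by (intro E; apply Pw; congruence).
      split.
      - rewrite <- (Hrep u w), <- (Hrep v w), (Hkey u w Huw), (Hkey v w Hvw), Pu.
        reflexivity.
      - rewrite <- (Hrep w u), <- (Hrep w v).
        rewrite (Hkey w u (fun E => Huw (eq_sym E))), (Hkey w v (fun E => Hvw (eq_sym E))), Pu.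
        reflexivity. }
    destruct Sk as [x' [y' [px [py Hd]]]]. apply Hd.
    transitivity (phi x').
    - unfold phi; f_equal; apply proof_irrelevance.
    - rewrite (Hall' x'), <- (Hall' y'). unfold phi; f_equal; apply proof_irrelevance. }
  exists k. intros [g Hg]. apply HnZL. exists (fun z => g (phi z)).
  intros u v E. apply Hphi, Hg, E.
Qed.
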